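(* Let $N\geq2$. For all integers $n,m$ such that none of $n+m$, $n-m$ is divisible by $2N$, $$[H^0_n,H^0_m]=2\sin\!\Bigl(\pi\tfrac{n-m}{2N}\Bigr)H^1_{n+m}+2\sin\!\Bigl(\pi\tfrac{n+m}{2N}\Bigr)H^1_{n-m}.$$
   Context: On $\mathcal{H}_N=(\mathbb{C}^2)^{\otimes N}$ let $c_j^\dagger=i^{j-1}\,i^{\sigma^z_1+\dots+\sigma^z_{j-1}}\sigma^+_j$, $c_j=i^{-j+1}\,i^{-\sigma^z_1-\dots-\sigma^z_{j-1}}\sigma^-_j$ (Jordan–Wigner fermions; $\sigma^a_j$ Pauli matrices on site $j$, $\sigma^\pm$ the raising/lowering matrices), and $e_j=c_jc_{j+1}^\dagger+c_{j+1}c_j^\dagger+i(c_j^\dagger c_j-c_{j+1}^\dagger c_{j+1})$, $1\leq j\leq N-1$. For $n\in\mathbb{Z}$ set $H^0_n=\sum_{j=1}^{N-1}\cos(\pi nj/N)\,e_j$, and for $k\in\mathbb{Z}$ not divisible by $2N$ define $H^1_k$ by $[H^0_0,H^0_k]=-4\sin(\pi\tfrac{k}{2N})H^1_k$. *)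

(* Defs.v *)
(* Complex numbers are implemented here as pairs of reals; operators on
   H_N = (C^2)^{(x)N} are 2^N x 2^N complex matrices, given entrywise on the
   computational basis, whose elements are labelled by x in [0, 2^N):
   the spin at site j (1 <= j <= N) is bit (j-1) of x, with bit false = e_0
   = "up" (sigma^z = +1) and bit true = e_1 = "down" (sigma^z = -1). *)
From Stdlib Require Import Reals ZArith Arith List Bool.
Open Scope R_scope.

Definition C : Type := (R * R)%type.
Definition RtoC (r : R) : C := (r, 0).
Definition C0 : C := (0, 0).
Definition C1 : C := (1, 0).
Definition Ci : C := (0, 1).
Definition Cadd (a b : C) : C := (fst a + fst b, snd a + snd b).
Definition Copp (a : C) : C := (- fst a, - snd a).
Definition Cmul (a b : C) : C :=
  (fst a * fst b - snd a * snd b, fst a * snd b + snd a * fst b).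
Fixpoint Cpow (a : C) (n : nat) : C :=
  match n with O => C1 | S k => Cmul a (Cpow a k) end.
Fixpoint Csum (n : nat) (f : nat -> C) : C :=
  match n with O => C0 | S k => Cadd (Csum k f) (f k) end.

Definition Op : Type := nat -> nat -> C.
Definition Opzero : Op := fun _ _ => C0.
Definition Opid : Op := fun x y => if Nat.eqb x y then C1 else C0.
Definition Opadd (A B : Op) : Op := fun x y => Cadd (A x y) (B x y).
Definition Opsub (A B : Op) : Op := fun x y => Cadd (A x y) (Copp (B x y)).
Definition Opscale (c : C) (A : Op) : Op := fun x y => Cmul c (A x y).
Definition Opmul (N : nat) (A B : Op) : Op :=
  fun x y => Csum (2 ^ N) (fun k => Cmul (A x k) (B k y)).
Definition comm (N : nat) (A B : Op) : Op := Opsub (Opmul N A B) (Opmul N B A).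
Fixpoint Opsum (n : nat) (F : nat -> Op) : Op :=
  match n with O => Opzero | S k => Opadd (Opsum k F) (F k) end.

(* 2x2 matrices, indexed by (row bit, column bit) *)
Definition Mat2 : Type := bool -> bool -> C.
(* sigma^+ = [[0,1],[0,0]] : e_1 |-> e_0 ;  sigma^- = [[0,0],[1,0]] *)
Definition sigma_plus : Mat2 := fun b c => if negb b && c then C1 else C0.
Definition sigma_minus : Mat2 := fun b c => if b && negb c then C1 else C0.
(* i^{sigma^z} = diag(i^1, i^{-1}) = diag(i, -i),
   i^{-sigma^z} = diag(i^{-1}, i) = diag(-i, i) *)
Definition i_pow_sz : Mat2 :=
  fun b c => if Bool.eqb b c then (if b then Copp Ci else Ci) else C0.
Definition i_pow_msz : Mat2 :=
  fun b c => if Bool.eqb b c then (if b then Ci else Copp Ci) else C0.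

(* the operator M acting on site j (1 <= j <= N), identity elsewhere *)
Definition agree_off (N j x y : nat) : bool :=
  forallb (fun k => Nat.eqb k (j - 1) ||
                    Bool.eqb (Nat.testbit x k) (Nat.testbit y k)) (seq 0 N).
Definition site (N j : nat) (M : Mat2) : Op :=
  fun x y => if agree_off N j x y
             then M (Nat.testbit x (j - 1)) (Nat.testbit y (j - 1)) else C0.

Fixpoint prod_sites (N : nat) (M : Mat2) (k : nat) : Op :=
  match k with
  | O => Opid
  | S k' => Opmul N (prod_sites N M k') (site N (S k') M)
  end.

(* c_j^dag = i^{j-1} i^{sz_1+...+sz_{j-1}} sigma^+_j *)
Definition cdag (N j : nat) : Op :=
  Opscale (Cpow Ci (j - 1))
          (Opmul N (prod_sites N i_pow_sz (j - 1)) (site N j sigma_plus)).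
(* c_j = i^{-j+1} i^{-sz_1-...-sz_{j-1}} sigma^-_j, with i^{-1} = -i *)
Definition cann (N j : nat) : Op :=
  Opscale (Cpow (Copp Ci) (j - 1))
          (Opmul N (prod_sites N i_pow_msz (j - 1)) (site N j sigma_minus)).

Definition e_op (N j : nat) : Op :=
  Opadd (Opadd (Opmul N (cann N j) (cdag N (j + 1)))
               (Opmul N (cann N (j + 1)) (cdag N j)))
        (Opscale Ci (Opsub (Opmul N (cdag N j) (cann N j))
                           (Opmul N (cdag N (j + 1)) (cann N (j + 1))))).

Definition H0 (N : nat) (n : Z) : Op :=
  Opsum (N - 1) (fun i =>
    Opscale (RtoC (cos (PI * IZR n * INR (S i) / INR N))) (e_op N (S i))).

(* H^1_k defined by [H^0_0, H^0_k] = -4 sin(pi k/(2N)) H^1_k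
   (meaningful for k not divisible by 2N, where the sine is nonzero) *)
Definition H1 (N : nat) (k : Z) : Op :=
  Opscale (RtoC (- / (4 * sin (PI * IZR k / (2 * INR N)))))
          (comm N (H0 N 0) (H0 N k)).

(* Main.v *)
Require Import Defs.
From Stdlib Require Import Reals ZArith Arith.
Open Scope R_scope.
From Stdlib Require Import Lia Lra Bool List.
Import Defs.

Lemma Ceq (a b : C) : fst a = fst b -> snd a = snd b -> a = b.
Proof. destruct a, b; simpl; intros; subst; reflexivity. Qed.

Definition Csub a b := Cadd a (Copp b).
Lemma Cring : ring_theory C0 C1 Cadd Cmul Csub Copp (@eq C).
Proof. constructor; intros; try reflexivity; apply Ceq; unfold Cadd, Cmul, Copp, C0, C1; simpl; ring. Qed.
Add Ring Cring : Cring.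

Lemma Csum_ext n f g : (forall i, (i < n)%nat -> f i = g i) -> Csum n f = Csum n g.
Proof. induction n; intros H; simpl; auto. rewrite IHn, H; auto. Qed.

Lemma Csum_add n f g : Csum n (fun i => Cadd (f i) (g i)) = Cadd (Csum n f) (Csum n g).
Proof. induction n; simpl. ring. rewrite IHn. ring. Qed.

Lemma Csum_scal n c f : Csum n (fun i => Cmul c (f i)) = Cmul c (Csum n f).
Proof. induction n; simpl. ring. rewrite IHn. ring. Qed.

Lemma Csum_zero n f : (forall i, (i < n)%nat -> f i = C0) -> Csum n f = C0.
Proof. induction n; intros H; simpl; auto. rewrite IHn, H; auto. ring. Qed.

Lemma Csum_single n f i0 : (i0 < n)%nat -> (forall i, (i < n)%nat -> i <> i0 -> f i = C0) -> Csum n f = f i0.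
Proof. induction n; intros H1 H2; [lia|]. simpl. destruct (Nat.eq_dec i0 n).
 - subst. rewrite Csum_zero. ring. intros; apply H2; lia.
 - rewrite IHn by (try lia; intros; apply H2; lia). rewrite (H2 n) by lia. ring. Qed.

Lemma Csum_swap n m (F : nat -> nat -> C) :
  Csum n (fun a => Csum m (fun b => F a b)) = Csum m (fun b => Csum n (fun a => F a b)).
Proof. induction n; simpl. rewrite Csum_zero; auto. rewrite IHn. rewrite <- Csum_add. reflexivity. Qed.

Lemma Opmul_add_l N A A' B x y : Opmul N (Opadd A A') B x y = Cadd (Opmul N A B x y) (Opmul N A' B x y).
Proof. unfold Opmul, Opadd. rewrite <- Csum_add. apply Csum_ext; intros; ring. Qed.
Lemma Opmul_add_r N A B B' x y : Opmul N A (Opadd B B') x y = Cadd (Opmul N A B x y) (Opmul N A B' x y).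
Proof. unfold Opmul, Opadd. rewrite <- Csum_add. apply Csum_ext; intros; ring. Qed.
Lemma Opmul_scale_l N c A B x y : Opmul N (Opscale c A) B x y = Cmul c (Opmul N A B x y).
Proof. unfold Opmul, Opscale. rewrite <- Csum_scal. apply Csum_ext; intros; ring. Qed.
Lemma Opmul_scale_r N c A B x y : Opmul N A (Opscale c B) x y = Cmul c (Opmul N A B x y).
Proof. unfold Opmul, Opscale. rewrite <- Csum_scal. apply Csum_ext; intros; ring. Qed.
Lemma Opmul_sum_l N L F B x y : Opmul N (Opsum L F) B x y = Csum L (fun a => Opmul N (F a) B x y).
Proof. induction L; simpl.
 - unfold Opmul, Opzero. apply Csum_zero. intros; ring.
 - rewrite Opmul_add_l, IHL. reflexivity. Qed.
Lemma Opmul_sum_r N L F A x y : Opmul N A (Opsum L F) x y = Csum L (fun a => Opmul N A (F a) x y).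
Proof. induction L; simpl.
 - unfold Opmul, Opzero. apply Csum_zero. intros; ring.
 - rewrite Opmul_add_r, IHL. reflexivity. Qed.
Lemma Opmul_ext N A A' B B' x y :
  (forall u v, (u < 2^N)%nat -> (v < 2^N)%nat -> A u v = A' u v) ->
  (forall u v, (u < 2^N)%nat -> (v < 2^N)%nat -> B u v = B' u v) ->
  (x < 2^N)%nat -> (y < 2^N)%nat -> Opmul N A B x y = Opmul N A' B' x y.
Proof. intros HA HB Hx Hy. unfold Opmul. apply Csum_ext. intros. rewrite HA, HB; auto. Qed.

Notation tb := Nat.testbit.
Definition tog (i x : nat) : nat := Nat.lxor x (2 ^ i).
Lemma tb_tog i x k : tb (tog i x) k = xorb (tb x k) (Nat.eqb i k).
Proof. unfold tog. rewrite Nat.lxor_spec, Nat.pow2_bits_eqb. reflexivity. Qed.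

Lemma high_false N x k : (x < 2^N)%nat -> (N <= k)%nat -> tb x k = false.
Proof. intros. rewrite <- (Nat.mod_small x (2^N)) by auto. apply Nat.mod_pow2_bits_high; auto. Qed.

Lemma lt_of_bits N x : (forall k, (N <= k)%nat -> tb x k = false) -> (x < 2^N)%nat.
Proof. intros H. assert (E : x = x mod 2^N).
 { apply Nat.bits_inj. intro k. destruct (Nat.lt_ge_cases k N).
   - rewrite Nat.mod_pow2_bits_low; auto.
   - rewrite Nat.mod_pow2_bits_high, H; auto. }
 rewrite E. apply Nat.mod_upper_bound. apply Nat.pow_nonzero. lia. Qed.

Lemma tog_lt N i x : (i < N)%nat -> (x < 2^N)%nat -> (tog i x < 2^N)%nat.
Proof. intros. apply lt_of_bits. intros k Hk. rewrite tb_tog, (high_false N x k) by auto.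
 replace (i =? k)%nat with false; auto. symmetry; apply Nat.eqb_neq; lia. Qed.

Lemma bits_eq_lt N x y : (x < 2^N)%nat -> (y < 2^N)%nat -> (forall k, (k < N)%nat -> tb x k = tb y k) -> x = y.
Proof. intros. apply Nat.bits_inj. intro k. destruct (Nat.lt_ge_cases k N); auto.
 rewrite (high_false N x), (high_false N y); auto. Qed.

Lemma tog_tog i x : tog i (tog i x) = x.
Proof. apply Nat.bits_inj. intro k. rewrite !tb_tog. destruct (tb x k), (i =? k)%nat; reflexivity. Qed.
Lemma tog_comm i j x : tog i (tog j x) = tog j (tog i x).
Proof. apply Nat.bits_inj. intro k. rewrite !tb_tog. destruct (tb x k), (i =? k)%nat, (j =? k)%nat; reflexivity. Qed.

Definition mono (p : nat -> nat) (a : nat -> C) : Op :=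
  fun x y => if Nat.eqb y (p x) then a x else C0.
Definition IsMono N (A : Op) p a :=
  (forall x, (x < 2^N)%nat -> (p x < 2^N)%nat) /\
  forall x y, (x < 2^N)%nat -> (y < 2^N)%nat -> A x y = mono p a x y.

Lemma Opmul_mono_l N p a B x y : (p x < 2^N)%nat ->
  Opmul N (mono p a) B x y = Cmul (a x) (B (p x) y).
Proof. intros H. unfold Opmul, mono. rewrite (Csum_single _ _ (p x)); auto.
 - rewrite Nat.eqb_refl. reflexivity.
 - intros i Hi Hne. rewrite (proj2 (Nat.eqb_neq _ _) Hne). ring. Qed.

Lemma IsMono_mul N A B p q a b : IsMono N A p a -> IsMono N B q b ->
  IsMono N (Opmul N A B) (fun x => q (p x)) (fun x => Cmul (a x) (b (p x))).
Proof. intros [Hp HA] [Hq HB]. split; auto. intros x y Hx Hy.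
 transitivity (Opmul N (mono p a) B x y).
 { unfold Opmul. apply Csum_ext. intros k Hk. rewrite HA; auto. }
 rewrite Opmul_mono_l by auto. rewrite HB by auto. unfold mono.
 destruct (y =? q (p x))%nat; ring. Qed.

Lemma IsMono_scale N c A p a : IsMono N A p a -> IsMono N (Opscale c A) p (fun x => Cmul c (a x)).
Proof. intros [Hp HA]. split; auto. intros. unfold Opscale. rewrite HA by auto. unfold mono.
 destruct (y =? p x)%nat; ring. Qed.

Lemma IsMono_ext N A p a p' a' : IsMono N A p a -> (forall x, (x < 2^N)%nat -> p x = p' x) ->
  (forall x, (x < 2^N)%nat -> a x = a' x) -> IsMono N A p' a'.
Proof. intros [Hp HA] E1 E2. split. intros; rewrite <- E1; auto.
 intros. rewrite HA by auto. unfold mono. rewrite E1, E2 by auto. reflexivity. Qed.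

Lemma Opid_mono N : IsMono N Opid (fun x => x) (fun _ => C1).
Proof. split; auto. intros. unfold Opid, mono. rewrite Nat.eqb_sym. reflexivity. Qed.

Lemma agree_off_spec N j x y : agree_off N j x y = true <->
  (forall k, (k < N)%nat -> k <> (j - 1)%nat -> tb x k = tb y k).
Proof. unfold agree_off. rewrite forallb_forall. split.
 - intros H k Hk Hne. specialize (H k). rewrite in_seq in H.
   assert (H' : (k =? j - 1)%nat || Bool.eqb (tb x k) (tb y k) = true) by (apply H; lia).
   apply orb_true_iff in H'. destruct H' as [H'|H'].
   + apply Nat.eqb_eq in H'. lia.
   + apply Bool.eqb_prop in H'. auto.
 - intros H k Hk. rewrite in_seq in Hk. apply orb_true_iff.
   destruct (Nat.eq_dec k (j-1)). left; apply Nat.eqb_eq; auto.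
   right. rewrite H by lia. apply Bool.eqb_reflx. Qed.

Lemma site_mono_diag N j M : (j - 1 < N)%nat -> M true false = C0 -> M false true = C0 ->
  IsMono N (site N j M) (fun x => x) (fun x => M (tb x (j-1)) (tb x (j-1))).
Proof. intros Hj H1 H2. split; auto. intros x y Hx Hy. unfold site, mono.
 destruct (Nat.eqb_spec y x).
 - subst. replace (agree_off N j x x) with true; auto. symmetry; apply agree_off_spec; auto.
 - destruct (agree_off N j x y) eqn:E; auto. rewrite agree_off_spec in E.
   destruct (tb x (j-1)) eqn:E1, (tb y (j-1)) eqn:E2; auto; exfalso; apply n; symmetry;
   apply (bits_eq_lt N); auto; intros k Hk; destruct (Nat.eq_dec k (j-1)).
   all: try (subst; congruence); auto. Qed.

Lemma site_mono_off N j M : (j - 1 < N)%nat -> M true true = C0 -> M false false = C0 ->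
  IsMono N (site N j M) (tog (j-1)) (fun x => M (tb x (j-1)) (negb (tb x (j-1)))).
Proof. intros Hj H1 H2. split. intros; apply tog_lt; auto. intros x y Hx Hy. unfold site, mono.
 destruct (Nat.eqb_spec y (tog (j-1) x)).
 - subst. replace (agree_off N j x (tog (j-1) x)) with true.
   + rewrite tb_tog, Nat.eqb_refl. destruct (tb x (j-1)); reflexivity.
   + symmetry; apply agree_off_spec. intros k Hk Hne. rewrite tb_tog.
     replace (j-1 =? k)%nat with false. destruct (tb x k); auto. symmetry; apply Nat.eqb_neq; lia.
 - destruct (agree_off N j x y) eqn:E; auto. rewrite agree_off_spec in E.
   destruct (tb x (j-1)) eqn:E1, (tb y (j-1)) eqn:E2; auto; exfalso; apply n;
   apply (bits_eq_lt N); auto; try (apply tog_lt; auto); intros k Hk; rewrite tb_tog;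
   destruct (Nat.eq_dec k (j-1)).
   all: try (subst; rewrite Nat.eqb_refl; rewrite E1, E2; reflexivity).
   all: (replace (j-1 =? k)%nat with false by (symmetry; apply Nat.eqb_neq; lia));
   rewrite E by auto; destruct (tb y k); reflexivity. Qed.

Fixpoint Sprod (M : Mat2) (k : nat) (x : nat) : C :=
  match k with O => C1 | S k' => Cmul (Sprod M k' x) (M (tb x k') (tb x k')) end.

Lemma prod_sites_mono N M k : (k <= N)%nat -> M true false = C0 -> M false true = C0 ->
  IsMono N (prod_sites N M k) (fun x => x) (Sprod M k).
Proof. intros Hk H1 H2. induction k; simpl.
 - apply Opid_mono.
 - eapply IsMono_ext. apply IsMono_mul. apply IHk; lia. apply site_mono_diag; auto. simpl; lia.
   reflexivity. intros. simpl. rewrite Nat.sub_0_r. reflexivity. Qed.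

Lemma Sprod_low M k x x' : (forall i, (i < k)%nat -> tb x i = tb x' i) -> Sprod M k x = Sprod M k x'.
Proof. induction k; intros H; simpl; auto. rewrite IHk, H; auto. Qed.

Definition cdagc (i x : nat) : C := Cmul (Cpow Ci i) (Cmul (Sprod i_pow_sz i x) (if tb x i then C0 else C1)).
Definition cannc (i x : nat) : C := Cmul (Cpow (Copp Ci) i) (Cmul (Sprod i_pow_msz i x) (if tb x i then C1 else C0)).

Lemma cdag_mono N i : (i < N)%nat -> IsMono N (cdag N (S i)) (tog i) (cdagc i).
Proof. intros. unfold cdag. replace (S i - 1)%nat with i by lia.
 eapply IsMono_ext. apply IsMono_scale. apply IsMono_mul. apply prod_sites_mono; auto; lia.
 apply site_mono_off; try reflexivity. lia.
 intros; simpl. rewrite Nat.sub_0_r. reflexivity.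
 intros; simpl. rewrite Nat.sub_0_r. unfold cdagc. unfold sigma_plus. destruct (tb x i); reflexivity. Qed.

Lemma cann_mono N i : (i < N)%nat -> IsMono N (cann N (S i)) (tog i) (cannc i).
Proof. intros. unfold cann. replace (S i - 1)%nat with i by lia.
 eapply IsMono_ext. apply IsMono_scale. apply IsMono_mul. apply prod_sites_mono; auto; lia.
 apply site_mono_off; try reflexivity. lia.
 intros; simpl. rewrite Nat.sub_0_r. reflexivity.
 intros; simpl. rewrite Nat.sub_0_r. unfold cannc. unfold sigma_minus. destruct (tb x i); reflexivity. Qed.

Lemma Cii : Cmul Ci Ci = Copp C1.
Proof. apply Ceq; unfold Cmul, Ci, Copp, C1; simpl; ring. Qed.

Lemma Cpow_inv i : Cmul (Cpow (Copp Ci) i) (Cpow Ci i) = C1.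
Proof. induction i; simpl. ring. 
 transitivity (Cmul (Cmul (Cpow (Copp Ci) i) (Cpow Ci i)) (Copp (Cmul Ci Ci))). ring.
 rewrite IHi, Cii. ring. Qed.

Lemma Sprod_inv i x : Cmul (Sprod i_pow_msz i x) (Sprod i_pow_sz i x) = C1.
Proof. induction i; simpl. ring.
 transitivity (Cmul (Cmul (Sprod i_pow_msz i x) (Sprod i_pow_sz i x))
    (Cmul (i_pow_msz (tb x i) (tb x i)) (i_pow_sz (tb x i) (tb x i)))). ring.
 rewrite IHi. unfold i_pow_msz, i_pow_sz. destruct (tb x i); simpl; ring [Cii]. Qed.

Lemma szt : i_pow_sz true true = Copp Ci. Proof. reflexivity. Qed.
Lemma szf : i_pow_sz false false = Ci. Proof. reflexivity. Qed.
Lemma mszt : i_pow_msz true true = Ci. Proof. reflexivity. Qed.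
Lemma mszf : i_pow_msz false false = Copp Ci. Proof. reflexivity. Qed.

Definition tau i x := tog (S i) (tog i x).
Definition fco i x := if xorb (tb x i) (tb x (S i)) then Copp C1 else C0.
Definition gco i x := Cmul Ci (Cadd (if tb x i then C0 else C1) (Copp (if tb x (S i) then C0 else C1))).

Lemma e_op_E N i x y : (S i < N)%nat -> (x < 2^N)%nat -> (y < 2^N)%nat ->
  e_op N (S i) x y = Cadd (mono (tau i) (fco i) x y) (mono (fun x => x) (gco i) x y).
Proof. intros Hi Hx Hy. unfold e_op. replace (S i + 1)%nat with (S (S i)) by lia.
 unfold Opadd, Opscale, Opsub.
 rewrite (proj2 (IsMono_mul N _ _ _ _ _ _ (cann_mono N i ltac:(lia)) (cdag_mono N (S i) ltac:(lia)))) by auto.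
 rewrite (proj2 (IsMono_mul N _ _ _ _ _ _ (cann_mono N (S i) ltac:(lia)) (cdag_mono N i ltac:(lia)))) by auto.
 rewrite (proj2 (IsMono_mul N _ _ _ _ _ _ (cdag_mono N i ltac:(lia)) (cann_mono N i ltac:(lia)))) by auto.
 rewrite (proj2 (IsMono_mul N _ _ _ _ _ _ (cdag_mono N (S i) ltac:(lia)) (cann_mono N (S i) ltac:(lia)))) by auto.
 unfold mono. rewrite !tog_tog. rewrite (tog_comm i (S i)). fold (tau i x).
 assert (P := Cpow_inv i). assert (S1 := Sprod_inv i x).
 unfold cannc, cdagc. simpl Cpow. simpl Sprod.
 rewrite (Sprod_low i_pow_sz i (tog i x) x), (Sprod_low i_pow_sz i (tog (S i) x) x),
   (Sprod_low i_pow_msz i (tog i x) x), (Sprod_low i_pow_msz i (tog (S i) x) x)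
   by (intros k Hk; rewrite tb_tog; replace (_ =? k)%nat with false by (symmetry; apply Nat.eqb_neq; lia);
       destruct (tb x k); reflexivity).
 rewrite !tb_tog, !Nat.eqb_refl.
 replace (i =? S i)%nat with false by (symmetry; apply Nat.eqb_neq; lia).
 replace (S i =? i)%nat with false by (symmetry; apply Nat.eqb_neq; lia).
 unfold fco, gco.
 destruct (y =? tau i x)%nat, (y =? x)%nat, (tb x i), (tb x (S i)); rewrite ?szt, ?szf, ?mszt, ?mszf; simpl.
 all: rewrite ?szt, ?szf, ?mszt, ?mszf.
 all: try ring [P S1 Cii]. all: try ring [P S1]. all: try ring [P]. all: try ring [S1]. all: try ring [Cii]. all: try ring.
Qed.

Lemma mono_comm N p q a b x y : (p x < 2^N)%nat -> (q x < 2^N)%nat ->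
  q (p x) = p (q x) -> b (p x) = b x -> a (q x) = a x ->
  Opmul N (mono p a) (mono q b) x y = Opmul N (mono q b) (mono p a) x y.
Proof. intros H1 H2 E1 E2 E3. rewrite !Opmul_mono_l by auto. unfold mono.
 rewrite E1, E2, E3. destruct (y =? p (q x))%nat; ring. Qed.

Lemma tau_lt N i x : (S i < N)%nat -> (x < 2^N)%nat -> (tau i x < 2^N)%nat.
Proof. intros. unfold tau. apply tog_lt; auto. apply tog_lt; auto; lia. Qed.

Lemma tb_tau_far i x k : k <> i -> k <> S i -> tb (tau i x) k = tb x k.
Proof. intros. unfold tau. rewrite !tb_tog.
 replace (i =? k)%nat with false by (symmetry; apply Nat.eqb_neq; lia).
 replace (S i =? k)%nat with false by (symmetry; apply Nat.eqb_neq; lia).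
 destruct (tb x k); reflexivity. Qed.

Lemma tau_comm a b x : tau a (tau b x) = tau b (tau a x).
Proof. apply Nat.bits_inj. intro k. unfold tau. rewrite !tb_tog.
 destruct (tb x k), (a =? k)%nat, (S a =? k)%nat, (b =? k)%nat, (S b =? k)%nat; reflexivity. Qed.

Lemma e_comm N a b x y : (a + 2 <= b)%nat -> (S b < N)%nat -> (x < 2^N)%nat -> (y < 2^N)%nat ->
  Opmul N (e_op N (S a)) (e_op N (S b)) x y = Opmul N (e_op N (S b)) (e_op N (S a)) x y.
Proof. intros Hab Hb Hx Hy.
 rewrite (Opmul_ext N (e_op N (S a)) (Opadd (mono (tau a) (fco a)) (mono (fun x => x) (gco a)))
   (e_op N (S b)) (Opadd (mono (tau b) (fco b)) (mono (fun x => x) (gco b)))) by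
   (auto; intros; unfold Opadd; apply e_op_E; auto; lia).
 rewrite (Opmul_ext N (e_op N (S b)) (Opadd (mono (tau b) (fco b)) (mono (fun x => x) (gco b)))
   (e_op N (S a)) (Opadd (mono (tau a) (fco a)) (mono (fun x => x) (gco a)))) by
   (auto; intros; unfold Opadd; apply e_op_E; auto; lia).
 rewrite !Opmul_add_l, !Opmul_add_r.
 assert (Fa : forall z, fco a (tau b z) = fco a z /\ gco a (tau b z) = gco a z).
 { intros z. unfold fco, gco. rewrite !tb_tau_far by lia. auto. }
 assert (Fb : forall z, fco b (tau a z) = fco b z /\ gco b (tau a z) = gco b z).
 { intros z. unfold fco, gco. rewrite !tb_tau_far by lia. auto. }
 assert (Ta : (tau a x < 2^N)%nat) by (apply tau_lt; auto; lia).
 assert (Tb : (tau b x < 2^N)%nat) by (apply tau_lt; auto; lia).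
 rewrite (mono_comm N (tau a) (tau b)), (mono_comm N (tau a) (fun x => x)),
   (mono_comm N (fun x => x) (tau b)), (mono_comm N (fun x => x) (fun x => x));
   auto; try apply tau_comm; try apply Fa; try apply Fb.
 ring. Qed.

Lemma Csum_opp n f : Copp (Csum n f) = Csum n (fun i => Copp (f i)).
Proof. induction n; simpl. apply Ceq; simpl; ring. rewrite <- IHn. ring. Qed.

Lemma collapse L (f g : nat -> C) (K : nat -> nat -> C) :
 (forall a, (a < L)%nat -> K a a = C0) ->
 (forall a b, (a < L)%nat -> (b < L)%nat -> K b a = Copp (K a b)) ->
 (forall a b, (a < L)%nat -> (b < L)%nat -> (a + 2 <= b)%nat -> K a b = C0) ->
 Csum L (fun a => Csum L (fun b => Cmul (Cmul (f a) (g b)) (K a b))) =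
 Csum (pred L) (fun a => Cmul (Csub (Cmul (f a) (g (S a))) (Cmul (f (S a)) (g a))) (K a (S a))).
Proof. induction L as [|L IH]; intros H0 H1 H2; [reflexivity|].
 cbn [Csum]. rewrite Csum_add. rewrite IH by (intros; auto; lia).
 destruct L as [|L'].
 - simpl. rewrite H0 by lia. ring.
 - rewrite (Csum_single (S L') (fun a => Cmul (Cmul (f a) (g (S L'))) (K a (S L'))) L') by
     (try lia; intros; rewrite H2 by lia; ring).
   rewrite (Csum_single (S L') (fun b => Cmul (Cmul (f (S L')) (g b)) (K (S L') b)) L') by
     (try lia; intros b Hb Hne; rewrite (H1 b (S L')), H2 by lia; ring).
   rewrite (H0 (S L')) by lia. rewrite (H1 L' (S L')) by lia. simpl pred. simpl Csum.
   unfold Csub. ring. Qed.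

Definition cf (N : nat) (n : Z) (a : nat) : R := cos (PI * IZR n * INR (S a) / INR N).
Definition Kc N x y a b := comm N (e_op N (S a)) (e_op N (S b)) x y.

Lemma prod_expand N n m x y :
  Opmul N (H0 N n) (H0 N m) x y = Csum (N-1) (fun a => Csum (N-1) (fun b =>
    Cmul (RtoC (cf N n a)) (Cmul (RtoC (cf N m b)) (Opmul N (e_op N (S a)) (e_op N (S b)) x y)))).
Proof. unfold H0. rewrite Opmul_sum_l. apply Csum_ext. intros a Ha.
 rewrite Opmul_sum_r. apply Csum_ext. intros b Hb.
 rewrite Opmul_scale_l, Opmul_scale_r. reflexivity. Qed.

Lemma comm_expand N n m x y : (2 <= N)%nat -> (x < 2^N)%nat -> (y < 2^N)%nat ->
  comm N (H0 N n) (H0 N m) x y = Csum (N-2) (fun a =>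
    Cmul (RtoC (cf N n a * cf N m (S a) - cf N n (S a) * cf N m a)) (Kc N x y a (S a))).
Proof. intros HN Hx Hy. unfold comm at 1, Opsub. rewrite !prod_expand.
 rewrite (Csum_swap (N-1) (N-1) (fun a b => Cmul (RtoC (cf N m a)) (Cmul (RtoC (cf N n b)) (Opmul N (e_op N (S a)) (e_op N (S b)) x y)))).
 rewrite Csum_opp, <- Csum_add.
 rewrite (Csum_ext _ _ (fun a => Csum (N-1) (fun b => Cmul (Cmul (RtoC (cf N n a)) (RtoC (cf N m b))) (Kc N x y a b)))).
 2:{ intros a Ha. rewrite Csum_opp, <- Csum_add. apply Csum_ext. intros b Hb.
     unfold Kc, comm, Opsub. ring. }
 rewrite collapse.
 - replace (pred (N-1)) with (N-2)%nat by lia. apply Csum_ext. intros a Ha. f_equal.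
   apply Ceq; unfold Csub, Cmul, Cadd, Copp, RtoC; simpl; ring.
 - intros. unfold Kc, comm, Opsub. ring.
 - intros. unfold Kc, comm, Opsub. ring.
 - intros. unfold Kc, comm, Opsub. rewrite e_comm by (auto; lia). ring.
Qed.

Lemma cos_diff2 X Y : cos (X + 2 * Y) - cos X = -2 * sin (X + Y) * sin Y.
Proof. replace (X + 2 * Y) with ((X + Y) + Y) by ring. replace X with ((X + Y) - Y) at 2 by ring.
 rewrite cos_plus, cos_minus. ring. Qed.

Lemma trig A B p q : sin (p + q) <> 0 -> sin (p - q) <> 0 ->
 cos A * cos (B + 2 * q) - cos (A + 2 * p) * cos B =
 2 * sin (p - q) * (- / (4 * sin (p + q))) * (1 * cos (A + B + 2 * (p + q)) - 1 * cos (A + B)) +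
 2 * sin (p + q) * (- / (4 * sin (p - q))) * (1 * cos (A - B + 2 * (p - q)) - 1 * cos (A - B)).
Proof. intros H1 H2. rewrite !Rmult_1_l, !cos_diff2.
 assert (E : cos A * cos (B + 2 * q) - cos (A + 2 * p) * cos B =
   sin (p - q) * sin (A + B + (p + q)) + sin (p + q) * sin (A - B + (p - q))).
 { set (U := A + p). set (V := B + q).
   replace A with (U - p) by (unfold U; ring). replace B with (V - q) by (unfold V; ring).
   replace (V - q + 2 * q) with (V + q) by ring. replace (U - p + 2 * p) with (U + p) by ring.
   replace (U - p + (V - q) + (p + q)) with (U + V) by ring.
   replace (U - p - (V - q) + (p - q)) with (U - V) by ring.
   rewrite !sin_plus, !sin_minus, !cos_plus, !cos_minus. ring. }
 rewrite E. field. auto. Qed.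

Lemma sin_nz N K : (1 <= N)%nat -> ~ (2 * Z.of_nat N | K)%Z -> sin (PI * IZR K / (2 * INR N)) <> 0.
Proof. intros HN Hd H. apply sin_eq_0_0 in H. destruct H as [k Hk]. apply Hd. exists k.
 assert (HNr : INR N <> 0) by (apply not_0_INR; lia).
 assert (E : IZR K = IZR k * (2 * INR N)).
 { apply (Rmult_eq_reg_r (/ (2 * INR N) * PI)). 2:{ apply Rmult_integral_contrapositive; split.
     apply Rinv_neq_0_compat; lra. apply PI_neq0. }
   replace (IZR K * (/ (2 * INR N) * PI)) with (PI * IZR K / (2 * INR N)) by (field; auto).
   rewrite Hk. field; auto. }
 apply eq_IZR. rewrite E, mult_IZR, mult_IZR, <- INR_IZR_INZ. reflexivity. Qed.

Theorem mainTheorem5 (N : nat) (HN : (2 <= N)%nat) (n m : Z)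
  (Hp : ~ (2 * Z.of_nat N | n + m)%Z) (Hm : ~ (2 * Z.of_nat N | n - m)%Z)
  (x y : nat) (Hx : (x < 2 ^ N)%nat) (Hy : (y < 2 ^ N)%nat) :
  comm N (H0 N n) (H0 N m) x y =
  Opadd (Opscale (RtoC (2 * sin (PI * IZR (n - m) / (2 * INR N)))) (H1 N (n + m)))
        (Opscale (RtoC (2 * sin (PI * IZR (n + m) / (2 * INR N)))) (H1 N (n - m)))
        x y.
Proof.
 unfold H1. unfold Opadd, Opscale. rewrite !comm_expand by auto.
 rewrite <- !Csum_scal, <- Csum_add. apply Csum_ext. intros a Ha.
 assert (HNr : INR N <> 0) by (apply not_0_INR; lia).
 assert (Hc : cf N n a * cf N m (S a) - cf N n (S a) * cf N m a =
   2 * sin (PI * IZR (n - m) / (2 * INR N)) * (- / (4 * sin (PI * IZR (n + m) / (2 * INR N)))) *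
     (cf N 0 a * cf N (n + m) (S a) - cf N 0 (S a) * cf N (n + m) a) +
   2 * sin (PI * IZR (n + m) / (2 * INR N)) * (- / (4 * sin (PI * IZR (n - m) / (2 * INR N)))) *
     (cf N 0 a * cf N (n - m) (S a) - cf N 0 (S a) * cf N (n - m) a)).
 { set (p := PI * IZR n / (2 * INR N)). set (q := PI * IZR m / (2 * INR N)).
   set (J := INR (S a)).
   assert (Ep : PI * IZR (n + m) / (2 * INR N) = p + q) by (unfold p, q; rewrite plus_IZR; field; auto).
   assert (Em : PI * IZR (n - m) / (2 * INR N) = p - q) by (unfold p, q; rewrite minus_IZR; field; auto).
   assert (H1 := sin_nz N (n + m) ltac:(lia) Hp). assert (H2 := sin_nz N (n - m) ltac:(lia) Hm).
   rewrite Ep in *. rewrite Em in *.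
   unfold cf. rewrite (S_INR (S a)). fold J.
   replace (PI * IZR 0 * J / INR N) with 0 by (simpl; field; auto).
   replace (PI * IZR 0 * (J + 1) / INR N) with 0 by (simpl; field; auto).
   rewrite cos_0.
   replace (PI * IZR n * J / INR N) with (2 * J * p) by (unfold p; field; auto).
   replace (PI * IZR m * J / INR N) with (2 * J * q) by (unfold q; field; auto).
   replace (PI * IZR n * (J + 1) / INR N) with (2 * J * p + 2 * p) by (unfold p; field; auto).
   replace (PI * IZR m * (J + 1) / INR N) with (2 * J * q + 2 * q) by (unfold q; field; auto).
   replace (PI * IZR (n + m) * J / INR N) with (2 * J * p + 2 * J * q) by (unfold p, q; rewrite plus_IZR; field; auto).
   replace (PI * IZR (n + m) * (J + 1) / INR N) with (2 * J * p + 2 * J * q + 2 * (p + q)) by (unfold p, q; rewrite plus_IZR; field; auto).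
   replace (PI * IZR (n - m) * J / INR N) with (2 * J * p - 2 * J * q) by (unfold p, q; rewrite minus_IZR; field; auto).
   replace (PI * IZR (n - m) * (J + 1) / INR N) with (2 * J * p - 2 * J * q + 2 * (p - q)) by (unfold p, q; rewrite minus_IZR; field; auto).
   apply trig; auto. }
 destruct (Kc N x y a (S a)) as [k1 k2]. rewrite Hc. apply Ceq; unfold Cmul, Cadd, RtoC; simpl; ring.
Qed.
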